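(* For every integer $m\ge2$, $$G_m(t,0)=(-1)^m\,t\,\Pi_{m-1}(t)\quad\text{and}\quad G_m\!\left(t,\tfrac12\right)=\frac{(-1)^m}{2^{m-1}}\widetilde{\Pi}_{m-1}(t).$$
   Context: $G_1(t,\beta)=-1$ and for $m\ge2$, $G_m(t,\beta)=[\beta(t-1)-(m-1)t]G_{m-1}(t,\beta)+t(t-1)\frac{\partial}{\partial t}G_{m-1}(t,\beta)$. The Euler–Frobenius polynomials satisfy $\Pi_0(t)=1$, $\Pi_{m+1}(t)=(1+mt)\Pi_m(t)+t(1-t)\Pi_m'(t)$, and the modified Euler–Frobenius polynomials satisfy $\widetilde\Pi_0(t)=1$, $\widetilde\Pi_{m+1}(t)=(1+(2m+1)t)\widetilde\Pi_m(t)+2t(1-t)\widetilde\Pi_m'(t)$. *)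

(* Defs.v *)
From mathcomp Require Import all_boot all_order all_algebra.
Set Implicit Arguments. Unset Strict Implicit. Unset Printing Implicit Defensive.
Import GRing.Theory Num.Theory.
Local Open Scope ring_scope.

(* G_aux beta n = G_{n+1}(t, beta), as a polynomial in t over R. *)
Fixpoint G_aux (R : numFieldType) (beta : R) (n : nat) : {poly R} :=
  match n with
  | 0 => - 1
  | n'.+1 => let g := G_aux beta n' in
      (beta *: ('X - 1) - (n'.+1)%:R *: 'X) * g + ('X * ('X - 1)) * g^`()
  end.

(* G m beta = G_m(t, beta) for m >= 1 (G 0 beta is junk = G_1). *)
Definition G (R : numFieldType) (m : nat) (beta : R) : {poly R} := G_aux beta m.-1.

Fixpoint EF (R : numFieldType) (m : nat) : {poly R} :=
  match m with
  | 0 => 1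
  | m'.+1 => (1 + m'%:R *: 'X) * EF R m' + ('X * (1 - 'X)) * (EF R m')^`()
  end.

Fixpoint EFt (R : numFieldType) (m : nat) : {poly R} :=
  match m with
  | 0 => 1
  | m'.+1 => (1 + (2 * m' + 1)%:R *: 'X) * EFt R m'
             + (2%:R *: ('X * (1 - 'X))) * (EFt R m')^`()
  end.

(* Main.v *)
Require Import Defs.
From mathcomp Require Import all_boot all_order all_algebra ring.
Import GRing.Theory Num.Theory.
Local Open Scope ring_scope.

Lemma G_auxS (R : numFieldType) (beta : R) n : G_aux beta n.+1 =
  (beta *: ('X - 1) - (n.+1)%:R *: 'X) * G_aux beta n + ('X * ('X - 1)) * (G_aux beta n)^`().
Proof. by []. Qed.
Lemma EFS (R : numFieldType) m : EF R m.+1 = (1 + m%:R *: 'X) * EF R m + ('X * (1 - 'X)) * (EF R m)^`().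
Proof. by []. Qed.
Lemma EFtS (R : numFieldType) m : EFt R m.+1 = (1 + (2 * m + 1)%:R *: 'X) * EFt R m
             + (2%:R *: ('X * (1 - 'X))) * (EFt R m)^`().
Proof. by []. Qed.

Lemma p1 (R : numFieldType) n :
  G_aux (0:R) n.+1 = (-1) ^+ n *: ('X * EF R n.+1).
Proof.
elim: n => [|n IH].
  rewrite /= !derivE !scale0r.
  rewrite -!mul_polyC ?polyC1 ?rmorphXn /= ?rmorphN /= ?polyC1.
  ring.
rewrite G_auxS IH (EFS R n.+1); move: (EF R n.+1) => E.
rewrite !derivE !scale0r.
rewrite -!mul_polyC !rmorphXn /= !rmorphN /= polyC1 ?polyC_natr.
rewrite exprS; move: ((-1) ^+ n : {poly R}) => c.
ring.
Qed.

Lemma key (P : comNzRingType) (c H N X E E' : P) : 2 * H = 1 ->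
  (H * (X - 1) - (N + 1) * X) * (c * E) + X * (X - 1) * (c * E') =
  - (c * H) * ((1 + (2 * N + 1) * X) * E + 2 * (X * (1 - X)) * E').
Proof.
move=> h; apply/eqP; rewrite -subr_eq0; apply/eqP.
transitivity (c * (1 - 2 * H) * (X * (X - 1) * E' - (N + 1) * X * E)); first ring.
by rewrite h subrr mulr0 mul0r.
Qed.

Lemma p2 (R : numFieldType) n :
  G_aux (2%:R^-1:R) n = ((-1) ^+ n.+1 / 2%:R ^+ n) *: EFt R n.
Proof.
elim: n => [|n IH].
  by rewrite /= expr1 expr0 divr1 scaleN1r.
rewrite G_auxS IH (EFtS R n); move: (EFt R n) => E; rewrite !derivE.
have h2 : (2%:R : R) != 0 by rewrite pnatr_eq0.
set c := (-1) ^+ n.+1 / 2%:R ^+ n.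
have -> : (-1) ^+ n.+2 / 2%:R ^+ n.+1 = - (c * 2%:R^-1) :> R.
  by rewrite /c [in LHS]exprS [2%:R ^+ n.+1]exprS invfM; field; rewrite expf_neq0.
have eH : 2 * (2%:R^-1 : R)%:P = 1.
  by rewrite -polyC_natr -polyCM mulfV // polyC1.
have K := @key {poly R} c%:P (2%:R^-1 : R)%:P n%:R 'X E E^`() eH.
rewrite -!mul_polyC !polyCN (polyCM c).
apply: etrans _ (etrans K _).
  rewrite -?mul_polyC ?polyC_natr. ring.
rewrite !polyC_natr natrD natrM. ring.
Qed.

Theorem lemma5p1 (R : numFieldType) (m : nat) :
  (2 <= m)%N ->
  G m 0 = (-1) ^+ m *: ('X * EF R m.-1) /\
  G m (2%:R^-1 : R) = ((-1) ^+ m / 2%:R ^+ m.-1) *: EFt R m.-1.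
Proof.
case: m => [|[|n]] // _; split.
  by rewrite /G (p1 R n) !exprS !mulN1r opprK.
by rewrite /G (p2 R n.+1).
Qed.
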